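(* For every integer $N\geq 0$ the following identities hold in $\mathcal{A}(S^5_q)$: $$\sum_{j+k+l=N}[j,k,l]!\,(z_1^jz_2^kz_3^l)(z_1^jz_2^kz_3^l)^*=1,\qquad \sum_{j+k+l=N}q^{2(j-l)}[j,k,l]!\,(z_1^jz_2^kz_3^l)^*(z_1^jz_2^kz_3^l)=q^{-2N},$$ where the sums run over all triples $(j,k,l)$ of non-negative integers with $j+k+l=N$.
   Context: Fix $0<q<1$. $\mathcal{A}(S^5_q)$ is the unital $*$-algebra generated by $z_1,z_2,z_3$ and their adjoints with relations: $z_iz_j=qz_jz_i$ for $i<j$; $z_i^*z_j=qz_jz_i^*$ for $i\neq j$; $[z_1^*,z_1]=0$; $[z_2^*,z_2]=(1-q^2)z_1z_1^*$; $[z_3^*,z_3]=(1-q^2)(z_1z_1^*+z_2z_2^* )$; $z_1z_1^*+z_2z_2^*+z_3z_3^*=1$. For $x\in\mathbb{C}$, $[x]:=\frac{q^x-q^{-x}}{q-q^{-1}}$; for $n\in\mathbb{N}$, $[n]!:=[n][n-1]\cdots[1]$, $[0]!:=1$. The $q$-trinomial coefficient is $[j,k,l]!:=q^{-(jk+kl+lj)}\frac{[j+k+l]!}{[j]![k]![l]!}$. *)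

(* Defs.v *)
From HB Require Import structures.
From mathcomp Require Import all_boot all_order all_algebra.
Set Implicit Arguments. Unset Strict Implicit. Unset Printing Implicit Defensive.
Import Order.TTheory GRing.Theory Num.Theory.
Local Open Scope ring_scope.

Definition qnum {K : fieldType} (q : K) (n : nat) : K :=
  (q ^+ n - q ^- n) / (q - q^-1).

Definition qfact {K : fieldType} (q : K) (n : nat) : K :=
  \prod_(i < n) qnum q i.+1.

Definition qtrinom {K : fieldType} (q : K) (j k l : nat) : K :=
  q ^- (j * k + k * l + l * j)%N * qfact q (j + k + l)
  / (qfact q j * qfact q k * qfact q l).

Definition is_star {K : numClosedFieldType} {A : algType K} (star : A -> A) : Prop :=
  [/\ forall a b : A, star (a + b) = star a + star b,
      forall (c : K) (a : A), star (c *: a) = Num.conj c *: star a,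
      forall a b : A, star (a * b) = star b * star a,
      forall a : A, star (star a) = a
    & star 1 = 1].

Definition S5q_relations {K : numClosedFieldType} {A : algType K}
    (q : K) (star : A -> A) (z1 z2 z3 : A) : Prop :=
  [/\
      [/\ z1 * z2 = q *: (z2 * z1), z1 * z3 = q *: (z3 * z1)
        & z2 * z3 = q *: (z3 * z2)],
      [/\ star z1 * z2 = q *: (z2 * star z1), star z1 * z3 = q *: (z3 * star z1),
          star z2 * z1 = q *: (z1 * star z2) & star z2 * z3 = q *: (z3 * star z2)],
      [/\ star z3 * z1 = q *: (z1 * star z3) & star z3 * z2 = q *: (z2 * star z3)],
      [/\ star z1 * z1 - z1 * star z1 = 0,
          star z2 * z2 - z2 * star z2 = (1 - q ^+ 2) *: (z1 * star z1)
        & star z3 * z3 - z3 * star z3 = (1 - q ^+ 2) *: (z1 * star z1 + z2 * star z2)]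
    & z1 * star z1 + z2 * star z2 + z3 * star z3 = 1].

Definition mono {K : numClosedFieldType} {A : algType K} (z1 z2 z3 : A) (j k l : nat) : A :=
  z1 ^+ j * z2 ^+ k * z3 ^+ l.

(* Main.v *)
Require Import Defs.
From HB Require Import structures.
From mathcomp Require Import all_boot all_order all_algebra.
From Stdlib Require Import Ring Field Lia.
Import Order.TTheory GRing.Theory Num.Theory.
Local Open Scope ring_scope.

Module Helpers.
Set Implicit Arguments. Unset Strict Implicit. Unset Printing Implicit Defensive.

Ltac natlia := rewrite -?plusE -?multE; lia.

Lemma Kfield (K : fieldType) : field_theory (0:K) 1 +%R *%R (fun x y => x - y) -%R (fun x y => x / y) GRing.inv (@eq K).
Proof. constructor. split=> //=; [exact: add0r|exact: addrC|exact: addrA|exact: mul1r|exact: mulrC|exact: mulrA|exact: mulrDl|exact: subrr]. apply/eqP; exact: oner_neq0. by []. move=> p /eqP Hp; exact: mulVf. Qed.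

Section Abs.
Variables (R : Type) (rO rI : R) (radd rmul rsub : R -> R -> R) (ropp : R -> R) (rdiv : R -> R -> R) (rinv : R -> R).
Hypothesis Fth : field_theory rO rI radd rmul rsub ropp rdiv rinv (@eq R).
Add Field Fa : Fth.
Local Notation "x + y" := (radd x y).
Local Notation "x * y" := (rmul x y).
Local Notation "x / y" := (rdiv x y).
Local Notation "x - y" := (rsub x y).
Local Notation "x ^-1" := (rinv x).
Local Notation "0" := rO.
Local Notation "1" := rI.

Lemma absR (e s F n fa fb fc ra : R) : e <> 0 -> s <> 0 -> fa <> 0 -> fb <> 0 -> fc <> 0 -> ra <> 0 ->
  e^-1 * F * (fa * fb * fc)^-1 * n = (e * s)^-1 * (F * n) * (fa * ra * fb * fc)^-1 * s * ra.
Proof. intros; field; repeat split; auto. Qed.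

Lemma absPhi (t u v w D : R) : u <> 0 -> v <> 0 -> w <> 0 -> D <> 0 -> u*v*w - (u*v*w)^-1 <> 0 ->
  t * (v * w) * ((u - u^-1) / D) / ((u*v*w - (u*v*w)^-1) / D)
  + t * (u * w) * ((v - v^-1) / D) / ((u*v*w - (u*v*w)^-1) / D) * (u*u)^-1
  + t * (u * v) * ((w - w^-1) / D) / ((u*v*w - (u*v*w)^-1) / D) * ((u*v)*(u*v))^-1 = t.
Proof. intros. field. repeat split; auto. intro E; apply H3.
replace (u*v*w - (u*v*w)^-1) with ((u*v*w*(u*v*w) - 1) / (u*v*w)) by (field; auto).
rewrite E; field; auto.
Qed.

Lemma absPsi (t u v w D : R) : u <> 0 -> v <> 0 -> w <> 0 -> D <> 0 -> u*v*w - (u*v*w)^-1 <> 0 ->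
  t * (v * w) * ((u - u^-1) / D) / ((u*v*w - (u*v*w)^-1) / D) * (u * u * (w * w)^-1 * ((v * w) * (v * w))^-1)
  + t * (u * w) * ((v - v^-1) / D) / ((u*v*w - (u*v*w)^-1) / D) * (u * u * (w * w)^-1 * (w * w)^-1)
  + t * (u * v) * ((w - w^-1) / D) / ((u*v*w - (u*v*w)^-1) / D) * (u * u * (w * w)^-1)
  = u * u * (w * w)^-1 * t.
Proof. intros. field. repeat split; auto. intro E; apply H3.
replace (u*v*w - (u*v*w)^-1) with ((u*v*w*(u*v*w) - 1) / (u*v*w)) by (field; auto).
rewrite E; field; auto.
Qed.

Lemma absA1 (x y t s z : R) : (x * y * t) * (s * z) = t * (s * x * y * z).
Proof. ring. Qed.
Lemma absA2 (x y t z : R) : (x * y * t) * z = t * (x * y * z).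
Proof. ring. Qed.
Lemma absA3 (x y t s : R) : y <> 0 -> s <> 0 -> (x * y^-1 * t) * s^-1 = t * (x * (s * y)^-1).
Proof. intros; field; auto. Qed.

End Abs.

Section Q.
Variables (K : numFieldType) (q : K).
Hypotheses (hq0 : 0 < q) (hq1 : q < 1).

Lemma qneq0 : q != 0. Proof. by rewrite gt_eqF. Qed.

Lemma qdiff_neq0 n : (0 < n)%N -> q ^+ n - q ^- n != 0.
Proof.
move=> hn; have lt : q ^+ n < 1 by rewrite exprn_ilt1 ?ltW // -lt0n.
have gt : 1 < (q ^+ n)^-1 by rewrite invf_gt1 ?exprn_gt0.
rewrite subr_eq0; apply/eqP => E; move: lt; rewrite E => lt'.
by have := lt_trans lt' gt; rewrite ltxx.
Qed.

Lemma qnum_neq0 n : (0 < n)%N -> qnum q n != 0.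
Proof. move=> hn; exact: (mulf_neq0 (qdiff_neq0 hn) (invr_neq0 (qdiff_neq0 (ltn0Sn 0)))). Qed.

Lemma qnum0 : qnum q 0 = 0.
Proof. by rewrite /qnum expr0 invr1 subrr mul0r. Qed.

Lemma qfact_neq0 n : qfact q n != 0.
Proof. by apply/prodf_neq0 => i _; apply: qnum_neq0. Qed.

Lemma qfactS n : qfact q n.+1 = qfact q n * qnum q n.+1.
Proof. by rewrite /qfact big_ord_recr. Qed.

Lemma tswap a b c : qtrinom q a b c = qtrinom q b a c.
Proof.
rewrite /qtrinom (addnC b a).
have -> : (b * a + a * c + c * b = a * b + b * c + c * a)%N by natlia.
by rewrite (mulrC (qfact q b)).
Qed.

Lemma trot a b c : qtrinom q a b c = qtrinom q c a b.
Proof.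
rewrite /qtrinom.
have -> : (c * a + a * b + b * c = a * b + b * c + c * a)%N by natlia.
have -> : (c + a + b = a + b + c)%N by natlia.
by congr (_ / _); rewrite mulrC mulrA.
Qed.

Lemma Rshift a b c : (if a is a'.+1 then qtrinom q a' b c else 0) * qnum q (a + b + c)
   = qtrinom q a b c * q ^+ (b + c) * qnum q a.
Proof.
case: a => [|a]; first by rewrite qnum0 mul0r mulr0.
rewrite /qtrinom !addSn !qfactS.
have -> : (a.+1 * b + b * c + c * a.+1 = (a * b + b * c + c * a) + (b + c))%N by natlia.
rewrite [in RHS]exprD.
exact: (@absR _ _ _ _ _ _ _ _ _ (Kfield K) _ _ _ _ _ _ _ _ (elimN eqP (expf_neq0 _ qneq0)) (elimN eqP (expf_neq0 _ qneq0)) (elimN eqP (qfact_neq0 _)) (elimN eqP (qfact_neq0 _)) (elimN eqP (qfact_neq0 _)) (elimN eqP (qnum_neq0 (ltn0Sn _)))).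
Qed.

Lemma ifmul (a : nat) (f : nat -> K) (x : K) :
  (if a is a'.+1 then f a' * x else 0) = (if a is a'.+1 then f a' else 0) * x.
Proof. by case: a => [|a] //; rewrite mul0r. Qed.

Lemma RshiftB a b c : (if b is b'.+1 then qtrinom q a b' c else 0) * qnum q (a + b + c)
   = qtrinom q a b c * q ^+ (a + c) * qnum q b.
Proof.
case: b => [|b]; first by rewrite mul0r qnum0 mulr0.
rewrite (tswap a b c) (tswap a b.+1 c) (addnC a b.+1); exact: (Rshift b.+1 a c).
Qed.

Lemma RshiftC a b c : (if c is c'.+1 then qtrinom q a b c' else 0) * qnum q (a + b + c)
   = qtrinom q a b c * q ^+ (a + b) * qnum q c.
Proof.
case: c => [|c]; first by rewrite mul0r qnum0 mulr0.
rewrite (trot a b c) (trot a b c.+1).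
have -> : (a + b + c.+1 = c.+1 + a + b)%N by natlia.
exact: (Rshift c.+1 a b).
Qed.

Lemma qexp_neq0 n : q ^+ n <> 0.
Proof. exact: (elimN eqP (expf_neq0 _ qneq0)). Qed.

Lemma D_neq0 : q - q^-1 <> 0.
Proof. exact: (elimN eqP (qdiff_neq0 (ltn0Sn 0))). Qed.

Lemma N3_neq0 a b c : (0 < a + b + c)%N ->
  q ^+ a * q ^+ b * q ^+ c - (q ^+ a * q ^+ b * q ^+ c)^-1 <> 0.
Proof. by move=> h; have := qdiff_neq0 h; rewrite !exprD => /eqP. Qed.

Lemma coefPhi a b c : (0 < a + b + c)%N ->
  (if a is a'.+1 then qtrinom q a' b c else 0)
  + (if b is b'.+1 then qtrinom q a b' c * (q ^+ a * q ^+ a)^-1 else 0)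
  + (if c is c'.+1 then qtrinom q a b c' * (q ^+ (a + b) * q ^+ (a + b))^-1 else 0)
  = qtrinom q a b c.
Proof.
move=> h.
rewrite (ifmul b (fun b' => qtrinom q a b' c)) (ifmul c (fun c' => qtrinom q a b c')).
have hn := qnum_neq0 h.
rewrite (canRL (mulfK hn) (Rshift a b c)) (canRL (mulfK hn) (RshiftB a b c)).
rewrite (canRL (mulfK hn) (RshiftC a b c)).
rewrite /qnum !exprD.
exact: (@absPhi _ _ _ _ _ _ _ _ _ (Kfield K) _ _ _ _ _ (@qexp_neq0 a) (@qexp_neq0 b) (@qexp_neq0 c) D_neq0 (N3_neq0 h)).
Qed.

Lemma coefPsi a b c : (0 < a + b + c)%N ->
  (if a is a'.+1 then (q ^+ (2 * a') * q ^- (2 * c) * qtrinom q a' b c) * (q ^+ 2 * (q ^+ (b + c) * q ^+ (b + c))^-1) else 0)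
  + (if b is b'.+1 then (q ^+ (2 * a) * q ^- (2 * c) * qtrinom q a b' c) * (q ^+ c * q ^+ c)^-1 else 0)
  + (if c is c'.+1 then (q ^+ (2 * a) * q ^- (2 * c') * qtrinom q a b c') * (q ^+ 2)^-1 else 0)
  = q ^+ (2 * a) * q ^- (2 * c) * qtrinom q a b c.
Proof.
move=> h.
have -> : (if a is a'.+1 then (q ^+ (2 * a') * q ^- (2 * c) * qtrinom q a' b c) * (q ^+ 2 * (q ^+ (b + c) * q ^+ (b + c))^-1) else 0)
   = (if a is a'.+1 then qtrinom q a' b c else 0) * (q ^+ (2 * a) * q ^- (2 * c) * (q ^+ (b + c) * q ^+ (b + c))^-1).
  case: a h => [|a] h; first by rewrite mul0r.
  rewrite mulnS [q ^+ (2 + _)]exprD; exact: (@absA1 _ _ _ _ _ _ _ _ _ (Kfield K)).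
have -> : (if b is b'.+1 then (q ^+ (2 * a) * q ^- (2 * c) * qtrinom q a b' c) * (q ^+ c * q ^+ c)^-1 else 0)
   = (if b is b'.+1 then qtrinom q a b' c else 0) * (q ^+ (2 * a) * q ^- (2 * c) * (q ^+ c * q ^+ c)^-1).
  case: b h => [|b] h; first by rewrite mul0r.
  exact: (@absA2 _ _ _ _ _ _ _ _ _ (Kfield K)).
have -> : (if c is c'.+1 then (q ^+ (2 * a) * q ^- (2 * c') * qtrinom q a b c') * (q ^+ 2)^-1 else 0)
   = (if c is c'.+1 then qtrinom q a b c' else 0) * (q ^+ (2 * a) * q ^- (2 * c)).
  case: c h => [|c] h; first by rewrite mul0r.
  rewrite mulnS [q ^+ (2 + _)]exprD; exact: (@absA3 _ _ _ _ _ _ _ _ _ (Kfield K) _ _ _ _ (@qexp_neq0 _) (@qexp_neq0 _)).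
have hn := qnum_neq0 h.
rewrite (canRL (mulfK hn) (Rshift a b c)) (canRL (mulfK hn) (RshiftB a b c)).
rewrite (canRL (mulfK hn) (RshiftC a b c)).
rewrite !(mulnC 2) !exprM !expr2 /qnum !exprD.
exact: (@absPsi _ _ _ _ _ _ _ _ _ (Kfield K) _ _ _ _ _ (@qexp_neq0 a) (@qexp_neq0 b) (@qexp_neq0 c) D_neq0 (N3_neq0 h)).
Qed.

End Q.


Definition T3 (V : zmodType) (N : nat) (F : nat -> nat -> nat -> V) : V :=
  \sum_(j < N.+1) \sum_(k < N.+1) \sum_(l < N.+1 | (j + k + l == N)%N) F j k l.
Definition T2 (V : zmodType) (N : nat) (F : nat -> nat -> nat -> V) : V :=
  \sum_(j < N.+1) \sum_(k < (N.+1 - j)%N) F j k (N - j - k)%N.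

Lemma T3E (V : zmodType) N (F : nat -> nat -> nat -> V) : T3 N F = T2 N F.
Proof.
rewrite /T3 /T2. apply: eq_bigr. move=> j _.
have hj : (N.+1 - j <= N.+1)%N by rewrite leq_subr.
rewrite (big_ord_widen _ (fun k => F j k (N - j - k)%N) hj) [RHS]big_mkcond /=.
apply: eq_bigr => k _.
case: (leqP (j + k) N) => hjk.
- have -> : (k < N.+1 - j)%N by rewrite ltn_subRL ltnS.
  have hl : (N - j - k < N.+1)%N by rewrite ltnS -subnDA leq_subr.
  rewrite (big_pred1 (Ordinal hl)) //= => l.
  rewrite /= -val_eqE /= -subnDA.
  by rewrite -[RHS](eqn_add2r (j + k)) subnK // [(l + _)%N]addnC.
- have -> : (k < N.+1 - j)%N = false.
    by apply/negbTE; rewrite -leqNgt leq_subLR.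
  rewrite big1 // => l /eqP hl.
  by have := leq_addr l (j + k); rewrite hl leqNgt hjk.
Qed.

Lemma sh1 (V : zmodType) N (H : nat -> nat -> nat -> V) :
  T2 N H = T2 N.+1 (fun a b c => if a is a'.+1 then H a' b c else 0).
Proof.
rewrite /T2 [RHS]big_ord_recl /= [X in _ = X + _]big1 ?add0r; last by [].
apply: eq_bigr => i _; rewrite /bump leq0n add1n add0n !subSS /=.
done.
Qed.

Lemma sh2 (V : zmodType) N (H : nat -> nat -> nat -> V) :
  T2 N H = T2 N.+1 (fun a b c => if b is b'.+1 then H a b' c else 0).
Proof.
rewrite /T2 [RHS]big_ord_recr /=.
rewrite [X in _ = _ + X]big1 ?addr0; last first.
  by case=> [[|b] hb] _ //; move: hb; rewrite subSS subSnn.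
apply: eq_bigr => i _; rewrite /= [(N.+2 - _)%N]subSn; last exact: ltnW.
rewrite [RHS]big_ord_recl /= add0r; apply: eq_bigr => k _.
by rewrite /bump leq0n add1n add0n -!subnDA addnS subSS.
Qed.

Lemma sh3 (V : zmodType) N (H : nat -> nat -> nat -> V) :
  T2 N H = T2 N.+1 (fun a b c => if c is c'.+1 then H a b c' else 0).
Proof.
rewrite /T2 [RHS]big_ord_recr /=.
rewrite [X in _ = _ + X]big1 ?addr0; last first.
  case=> [[|b] hb] _ //=; first by rewrite subnn.
  by move: hb; rewrite subSS subSnn.
apply: eq_bigr => i _; rewrite /= [(N.+2 - _)%N]subSn; last exact: ltnW.
rewrite [RHS]big_ord_recr /= subnn addr0.
apply: eq_bigr => k _; rewrite /= -[(N.+1 - i - k)%N]subnDA (@subSn (i + k)%N N) ?subnDA //.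
by have := ltn_ord k; rewrite ltn_subRL.
Qed.

Lemma T2_add (V : zmodType) N (F G : nat -> nat -> nat -> V) :
  T2 N (fun a b c => F a b c + G a b c) = T2 N F + T2 N G.
Proof.
rewrite /T2 -big_split; apply: eq_bigr => j _; by rewrite -big_split.
Qed.

Lemma T2_eqP (V : zmodType) N (F G : nat -> nat -> nat -> V) :
  (forall a b c, (a + b + c)%N = N -> F a b c = G a b c) -> T2 N F = T2 N G.
Proof.
move=> H; rewrite /T2; apply: eq_bigr => j _; apply: eq_bigr => k _; apply: H.
have := ltn_ord k; rewrite ltn_subRL ltnS => hk.
by rewrite -subnDA subnKC.
Qed.

Lemma T2_morph (V W : zmodType) (f : V -> W) N (F : nat -> nat -> nat -> V) :
  (forall x y, f (x + y) = f x + f y) -> f 0 = 0 ->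
  f (T2 N F) = T2 N (fun a b c => f (F a b c)).
Proof.
move=> hadd h0; rewrite /T2 (big_morph f hadd h0); apply: eq_bigr => j _.
exact: (big_morph f hadd h0).
Qed.

Lemma sh1' (K : pzRingType) (V : lmodType K) N (f : nat -> nat -> nat -> K) (g : nat -> nat -> nat -> V) :
  T2 N (fun j k l => f j k l *: g j.+1 k l)
  = T2 N.+1 (fun a b c => (if a is a'.+1 then f a' b c else 0) *: g a b c).
Proof. rewrite sh1; apply: T2_eqP => a b c _; case: a => [|a] /=; by rewrite ?scale0r. Qed.

Lemma sh2' (K : pzRingType) (V : lmodType K) N (f : nat -> nat -> nat -> K) (g : nat -> nat -> nat -> V) :
  T2 N (fun j k l => f j k l *: g j k.+1 l)
  = T2 N.+1 (fun a b c => (if b is b'.+1 then f a b' c else 0) *: g a b c).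
Proof. rewrite sh2; apply: T2_eqP => a b c _; case: b => [|b] /=; by rewrite ?scale0r. Qed.

Lemma sh3' (K : pzRingType) (V : lmodType K) N (f : nat -> nat -> nat -> K) (g : nat -> nat -> nat -> V) :
  T2 N (fun j k l => f j k l *: g j k l.+1)
  = T2 N.+1 (fun a b c => (if c is c'.+1 then f a b c' else 0) *: g a b c).
Proof. rewrite sh3; apply: T2_eqP => a b c _; case: c => [|c] /=; by rewrite ?scale0r. Qed.


Lemma commX (K : pzRingType) (A : algType K) (x y : A) (c : K) :
  x * y = c *: (y * x) -> forall n, x ^+ n * y = c ^+ n *: (y * x ^+ n).
Proof.
move=> H; elim=> [|n IH]; first by rewrite !expr0 mul1r mulr1 scale1r.
rewrite exprS -mulrA IH -scalerAr [x * (y * _)]mulrA H -scalerAl scalerA.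
by rewrite exprSr mulrA.
Qed.

Lemma commX2 (K : pzRingType) (A : algType K) (x y : A) (c : K) :
  x * y = c *: (y * x) -> forall n, x * y ^+ n = c ^+ n *: (y ^+ n * x).
Proof.
move=> H; elim=> [|n IH]; first by rewrite !expr0 mul1r mulr1 scale1r.
rewrite exprS mulrA H -scalerAl -[y * x * _]mulrA IH -scalerAr scalerA.
by rewrite exprS mulrA.
Qed.

Lemma add3ACA (V : zmodType) (a1 b1 a2 b2 a3 b3 : V) :
  (a1 + b1) + (a2 + b2) + (a3 + b3) = (a1 + a2 + a3) + (b1 + b2 + b3).
Proof. by rewrite [(a1 + b1) + _]addrACA (addrACA (a1 + a2) (b1 + b2) a3 b3). Qed.

Lemma psi1_id (K : fieldType) (V : lmodType K) (P1 P2 P3 : V) (s : K) : s != 0 ->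
  s *: P1 + ((1 - s) *: P1 + P2) + s^-1 *: ((1 - s) *: (P1 + P2) + P3) = s^-1 *: (P1 + P2 + P3).
Proof.
move=> hs; rewrite scalerDr scalerA mulrBr mulr1 mulVf // !scalerBl !scale1r.
rewrite [s *: P1 + _]addrA [s *: P1 + _]addrC subrK [RHS]scalerDr.
by rewrite addrA [(P1 + P2) + (_ - _)]addrC subrK.
Qed.

Section Alg.
Variables (K : numClosedFieldType) (q : K) (A : algType K) (star : A -> A) (z1 z2 z3 : A).
Hypotheses (hq0 : 0 < q) (hq1 : q < 1) (hstar : is_star star) (hrel : S5q_relations q star z1 z2 z3).

Lemma star_add x y : star (x + y) = star x + star y. Proof. by case: hstar. Qed.
Lemma star_scale c x : star (c *: x) = Num.conj c *: star x. Proof. by case: hstar. Qed.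
Lemma star_mul x y : star (x * y) = star y * star x. Proof. by case: hstar. Qed.
Lemma star1 : star 1 = 1. Proof. by case: hstar. Qed.

Lemma R12 : z1 * z2 = q *: (z2 * z1). Proof. by case: hrel => [[]]. Qed.
Lemma R13 : z1 * z3 = q *: (z3 * z1). Proof. by case: hrel => [[]]. Qed.
Lemma R23 : z2 * z3 = q *: (z3 * z2). Proof. by case: hrel => [[]]. Qed.
Lemma Rc1 : star z1 * z1 = z1 * star z1.
Proof. by case: hrel => _ _ _ [/eqP]; rewrite subr_eq0 => /eqP. Qed.
Lemma Rc2 : star z2 * z2 = (1 - q ^+ 2) *: (z1 * star z1) + z2 * star z2.
Proof. by case: hrel => _ _ _ [_ /eqP]; rewrite subr_eq => /eqP. Qed.
Lemma Rc3 : star z3 * z3 = (1 - q ^+ 2) *: (z1 * star z1 + z2 * star z2) + z3 * star z3.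
Proof. by case: hrel => _ _ _ [_ _ /eqP]; rewrite subr_eq => /eqP. Qed.
Lemma Rsum : z1 * star z1 + z2 * star z2 + z3 * star z3 = 1.
Proof. by case: hrel. Qed.

Lemma conj_pos (c : K) : 0 < c -> Num.conj c = c.
Proof. by move=> h; apply: conj_Creal; apply: gtr0_real. Qed.

Local Notation m := (mono z1 z2 z3).

Lemma F1 j k l : m j.+1 k l = z1 * m j k l.
Proof. by rewrite /mono exprS !mulrA. Qed.

Lemma F2 j k l : m j k.+1 l = q ^+ j *: (z2 * m j k l).
Proof.
by rewrite /mono exprS mulrA (commX R12 j) -!scalerAl !mulrA.
Qed.

Lemma F3 j k l : m j k l.+1 = q ^+ (j + k) *: (z3 * m j k l).
Proof.
rewrite /mono exprS mulrA -[z1 ^+ j * z2 ^+ k * z3]mulrA (commX R23 k).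
rewrite -scalerAr -scalerAl [z1 ^+ j * (z3 * _)]mulrA (commX R13 j) -scalerAl -scalerAl scalerA exprD mulrC.
by rewrite !mulrA.
Qed.

Lemma G1 j k l : m j.+1 k l = q ^+ (k + l) *: (m j k l * z1).
Proof.
rewrite /mono exprSr -[z1 ^+ j * z1 * z2 ^+ k]mulrA (commX2 R12 k).
rewrite -scalerAr -scalerAl -!mulrA (commX2 R13 l) -!scalerAr scalerA exprD.
by rewrite !mulrA.
Qed.

Lemma G2 j k l : m j k.+1 l = q ^+ l *: (m j k l * z2).
Proof.
rewrite /mono exprSr -!mulrA (commX2 R23 l) -!scalerAr.
by rewrite !mulrA.
Qed.

Lemma G3 j k l : m j k l.+1 = m j k l * z3.
Proof. by rewrite /mono exprSr !mulrA. Qed.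

Lemma sqP (c : K) (x : A) : 0 < c -> (c *: x) * star (c *: x) = (c * c) *: (x * star x).
Proof. by move=> h; rewrite star_scale conj_pos // -scalerAr -scalerAl scalerA. Qed.
Lemma sqQ (c : K) (x : A) : 0 < c -> star (c *: x) * (c *: x) = (c * c) *: (star x * x).
Proof. by move=> h; rewrite star_scale conj_pos // -scalerAr -scalerAl scalerA. Qed.

Lemma qX_gt0 n : 0 < q ^+ n. Proof. exact: exprn_gt0. Qed.
Lemma qXX_neq0 n : q ^+ n * q ^+ n != 0.
Proof. by rewrite mulf_neq0 // gt_eqF // qX_gt0. Qed.

Definition P j k l := m j k l * star (m j k l).
Definition Q j k l := star (m j k l) * m j k l.
Definition Phi (a : A) := z1 * a * star z1 + z2 * a * star z2 + z3 * a * star z3.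
Definition Psi (a : A) := q ^+ 2 *: (star z1 * a * z1) + star z2 * a * z2 + (q ^+ 2)^-1 *: (star z3 * a * z3).

Lemma unscale (c : K) (x : A) : c != 0 -> c^-1 *: (c *: x) = x.
Proof. by move=> h; rewrite scalerA mulVf // scale1r. Qed.

Lemma Phi_P j k l : Phi (P j k l) = P j.+1 k l + (q ^+ j * q ^+ j)^-1 *: P j k.+1 l
   + (q ^+ (j + k) * q ^+ (j + k))^-1 *: P j k l.+1.
Proof.
rewrite /Phi /P F1 F2 F3 !sqP ?qX_gt0 // !unscale ?qXX_neq0 //.
by rewrite !star_mul !mulrA.
Qed.

Lemma Psi_Q j k l : Psi (Q j k l) = (q ^+ 2 * (q ^+ (k + l) * q ^+ (k + l))^-1) *: Q j.+1 k l
   + (q ^+ l * q ^+ l)^-1 *: Q j k.+1 l + (q ^+ 2)^-1 *: Q j k l.+1.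
Proof.
rewrite /Psi /Q G1 G2 G3 !sqQ ?qX_gt0 // -scalerA !unscale ?qXX_neq0 //.
by rewrite !star_mul !mulrA.
Qed.

Lemma Phi_add x y : Phi (x + y) = Phi x + Phi y.
Proof. by rewrite /Phi !mulrDr !mulrDl add3ACA. Qed.

Lemma Phi_scale c x : Phi (c *: x) = c *: Phi x.
Proof. by rewrite /Phi !scalerDr -!scalerAr -!scalerAl. Qed.

Lemma Psi_add x y : Psi (x + y) = Psi x + Psi y.
Proof. by rewrite /Psi !mulrDr !mulrDl !scalerDr add3ACA. Qed.

Lemma Psi_scale c x : Psi (c *: x) = c *: Psi x.
Proof.
rewrite /Psi !scalerDr -!scalerAr -!scalerAl !scalerA.
by rewrite (mulrC c) [(q ^+ 2)^-1 * c]mulrC.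
Qed.

Lemma Phi1 : Phi 1 = 1.
Proof. by rewrite /Phi !mulr1 Rsum. Qed.

Lemma Psi1 : Psi 1 = (q ^+ 2)^-1 *: 1.
Proof.
rewrite /Psi !mulr1 Rc1 Rc2 Rc3 -Rsum; apply: psi1_id.
by rewrite expf_neq0 // gt_eqF.
Qed.
Lemma Phi0 : Phi 0 = 0. Proof. by rewrite /Phi !mulr0 !mul0r !addr0. Qed.
Lemma Psi0 : Psi 0 = 0. Proof. by rewrite /Psi !mulr0 !mul0r !scaler0 !addr0. Qed.

Lemma mainPhi N : T2 N (fun j k l => qtrinom q j k l *: P j k l) = 1.
Proof.
elim: N => [|N IH].
  rewrite /T2 big_ord1 /= subn0 big_ord1 /=.
  rewrite /qtrinom /qfact !big_ord0 /P /mono !expr0 !mulr1 invr1 mul1r scale1r.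
  by rewrite star1 mulr1.
rewrite -Phi1 -IH T2_morph; [|exact: Phi_add|exact: Phi0].
rewrite (@T2_eqP _ N _ (fun a b c => (qtrinom q a b c) *: P a.+1 b c
   + (qtrinom q a b c * (q ^+ a * q ^+ a)^-1) *: P a b.+1 c
   + (qtrinom q a b c * (q ^+ (a + b) * q ^+ (a + b))^-1) *: P a b c.+1)); last first.
  by move=> a b c _; rewrite Phi_scale Phi_P !scalerDr !scalerA.
rewrite !T2_add sh1' sh2' sh3' -!T2_add.
apply: T2_eqP => a b c habc.
rewrite -!scalerDl coefPhi //; by rewrite habc.
Qed.

Lemma mainPsi N : T2 N (fun j k l => (q ^+ (2 * j) * q ^- (2 * l) * qtrinom q j k l) *: Q j k l)
  = q ^- (2 * N) *: 1.
Proof.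
elim: N => [|N IH].
  rewrite /T2 big_ord1 /= subn0 big_ord1 /=.
  rewrite /qtrinom /qfact !big_ord0 /Q /mono !expr0 !mulr1 invr1 !mul1r.
  by rewrite star1 scale1r.
have -> : q ^- (2 * N.+1) *: (1 : A) = Psi (q ^- (2 * N) *: 1).
  by rewrite Psi_scale Psi1 scalerA mulnS exprD invfM mulrC.
rewrite -IH T2_morph; [|exact: Psi_add|exact: Psi0].
rewrite (@T2_eqP _ N _ (fun a b c =>
     ((q ^+ (2 * a) * q ^- (2 * c) * qtrinom q a b c) * (q ^+ 2 * (q ^+ (b + c) * q ^+ (b + c))^-1)) *: Q a.+1 b c
   + ((q ^+ (2 * a) * q ^- (2 * c) * qtrinom q a b c) * (q ^+ c * q ^+ c)^-1) *: Q a b.+1 c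
   + ((q ^+ (2 * a) * q ^- (2 * c) * qtrinom q a b c) * (q ^+ 2)^-1) *: Q a b c.+1)); last first.
  by move=> a b c _; rewrite Psi_scale Psi_Q !scalerDr !scalerA.
rewrite !T2_add sh1' sh2' sh3' -!T2_add.
apply: T2_eqP => a b c habc.
rewrite -!scalerDl coefPsi //; by rewrite habc.
Qed.

End Alg.

End Helpers.
Import Helpers.

Theorem mainTheorem1 (K : numClosedFieldType) (q : K) (hq0 : 0 < q) (hq1 : q < 1)
    (A : algType K) (star : A -> A) (z1 z2 z3 : A)
    (hstar : is_star star) (hrel : S5q_relations q star z1 z2 z3) (N : nat) :
  \sum_(j < N.+1) \sum_(k < N.+1) \sum_(l < N.+1 | (j + k + l == N)%N)
      qtrinom q j k l *: (mono z1 z2 z3 j k l * star (mono z1 z2 z3 j k l)) = 1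
  /\
  \sum_(j < N.+1) \sum_(k < N.+1) \sum_(l < N.+1 | (j + k + l == N)%N)
      (q ^+ (2 * j) * q ^- (2 * l) * qtrinom q j k l)
        *: (star (mono z1 z2 z3 j k l) * mono z1 z2 z3 j k l)
    = (q ^- (2 * N)) *: 1.
Proof.
split.
- have H := mainPhi hq0 hq1 hstar hrel N.
  rewrite -T3E /T3 /P in H; exact: H.
- have H := mainPsi hq0 hq1 hstar hrel N.
  rewrite -T3E /T3 /Q in H; exact: H.
Qed.
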